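(* Let $\mathbf G_*=(\partial:G_1\to G_0)$ be a crossed module. The homomorphism $\delta:G_1\to\mathbf Z_0(\mathbf G_* )$ together with the bracket $\{(x,\xi),(y,\eta)\}:=\xi(y)$ is a braided crossed module, whose associated crossed module (with action ${}^{(x,\xi)}a:=\{(x,\xi),\delta a\}\,a$) is the crossed module $\delta:G_1\to\mathbf Z_0(\mathbf G_* )$ with action ${}^{(x,\xi)}a={}^xa$. This braided crossed module is denoted $\mathbf Z_*(\mathbf G_* )$ and called the centre of $\mathbf G_*$.
   Context: A crossed module $\mathbf G_*$: groups $G_1,G_0$, a homomorphism $\partial:G_1\to G_0$ and a left action $(x,a)\mapsto{}^xa$ of $G_0$ on $G_1$ by automorphisms, with $\partial({}^x a)=x\partial(a)x^{-1}$ and ${}^{\partial(b)}a=bab^{-1}$. Commutators $[x,y]=xyx^{-1}y^{-1}$. A braided crossed module is a group homomorphism $\partial:H_1\to H_0$ with a map $\{-,-\}:H_0\times H_0\to H_1$ such that for all $x,y,z\in H_0$, $a,b\in H_1$: $\partial\{x,y\}=[x,y]$; $\{\partial a,\partial b\}=[a,b]$; $\{\partial a,x\}=\{x,\partial a\}^{-1}$; $\{x,yz\}=\{x,y\}\{x,z\}\{zxz^{-1}x^{-1},y\}$; $\{xy,z\}=\{x,yzy^{-1}\}\{y,z\}$. $\mathbf Z_0(\mathbf G_* )$ is the set of pairs $(x,\xi)$, $x\in G_0$, $\xi:G_0\to G_1$ a map, with (Z1) $\partial\xi(t)=[x,t]$, (Z2) $\xi(\partial a)={}^xa\,a^{-1}$,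 (Z3) $\xi(st)=\xi(s)\,{}^s\xi(t)$ for all $s,t\in G_0$, $a\in G_1$; it is a group under $(x,\xi)(y,\eta)=(xy,\ t\mapsto{}^x\eta(t)\,\xi(t))$. $\delta(c)=(\partial c,\ t\mapsto c\,({}^tc)^{-1})$. *)

(* Defs.v *)
Set Implicit Arguments.

Record group := Group {
  gcar :> Type;
  gmul : gcar -> gcar -> gcar;
  ginv : gcar -> gcar;
  gone : gcar;
  gmulA : forall a b c, gmul a (gmul b c) = gmul (gmul a b) c;
  gmul1g : forall a, gmul gone a = a;
  gmulg1 : forall a, gmul a gone = a;
  gmulVg : forall a, gmul (ginv a) a = gone;
  gmulgV : forall a, gmul a (ginv a) = gone
}.
Arguments gmul {g}.
Arguments ginv {g}.
Arguments gone {g}.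

Definition gcomm {G : group} (x y : G) : G :=
  gmul (gmul (gmul x y) (ginv x)) (ginv y).

Definition is_group_on {T : Type} (P : T -> Prop)
  (mul : T -> T -> T) (inv : T -> T) (one : T) : Prop :=
  P one /\
  (forall a b, P a -> P b -> P (mul a b)) /\
  (forall a, P a -> P (inv a)) /\
  (forall a b c, P a -> P b -> P c -> mul a (mul b c) = mul (mul a b) c) /\
  (forall a, P a -> mul one a = a /\ mul a one = a) /\
  (forall a, P a -> mul (inv a) a = one /\ mul a (inv a) = one).

Definition commT {T : Type} (mul : T -> T -> T) (inv : T -> T) (x y : T) : T :=
  mul (mul (mul x y) (inv x)) (inv y).

(* Crossed module d : G1 -> H0, where H0 is the group (P0, mul0, inv0, one0)
   inside the type T0, with left action act of H0 on G1 by automorphisms. *)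
Definition is_xmod_on (G1 : group) {T0 : Type} (P0 : T0 -> Prop)
  (mul0 : T0 -> T0 -> T0) (inv0 : T0 -> T0) (one0 : T0)
  (d : G1 -> T0) (act : T0 -> G1 -> G1) : Prop :=
  is_group_on P0 mul0 inv0 one0 /\
  (forall a, P0 (d a)) /\
  (forall a b : G1, d (gmul a b) = mul0 (d a) (d b)) /\
  (forall a : G1, act one0 a = a) /\
  (forall x y a, P0 x -> P0 y -> act (mul0 x y) a = act x (act y a)) /\
  (forall x (a b : G1), P0 x -> act x (gmul a b) = gmul (act x a) (act x b)) /\
  (forall x a, P0 x -> d (act x a) = mul0 (mul0 x (d a)) (inv0 x)) /\
  (forall a b : G1, act (d b) a = gmul (gmul b a) (ginv b)).

Definition is_xmod (G1 G0 : group) (d : G1 -> G0) (act : G0 -> G1 -> G1) : Prop :=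
  is_xmod_on G1 (fun _ : G0 => True) gmul ginv gone d act.

Definition is_braided_xmod_on (H1 : group) {T0 : Type} (P0 : T0 -> Prop)
  (mul0 : T0 -> T0 -> T0) (inv0 : T0 -> T0) (one0 : T0)
  (d : H1 -> T0) (br : T0 -> T0 -> H1) : Prop :=
  is_group_on P0 mul0 inv0 one0 /\
  (forall a, P0 (d a)) /\
  (forall a b : H1, d (gmul a b) = mul0 (d a) (d b)) /\
  (forall x y, P0 x -> P0 y -> d (br x y) = commT mul0 inv0 x y) /\
  (forall a b : H1, br (d a) (d b) = gcomm a b) /\
  (forall x (a : H1), P0 x -> br (d a) x = ginv (br x (d a))) /\
  (forall x y z, P0 x -> P0 y -> P0 z ->
     br x (mul0 y z) =
     gmul (gmul (br x y) (br x z)) (br (commT mul0 inv0 z x) y)) /\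
  (forall x y z, P0 x -> P0 y -> P0 z ->
     br (mul0 x y) z = gmul (br x (mul0 (mul0 y z) (inv0 y))) (br y z)).

(* The group Z_0 of the crossed module G : pairs (x, xi) with xi : G0 -> G1 satisfying (Z1)-(Z3). *)
Section Centre.
Variables (G1 G0 : group) (bd : G1 -> G0) (act : G0 -> G1 -> G1).

Definition Z0T : Type := (G0 * (G0 -> G1))%type.

Definition inZ0 (p : Z0T) : Prop :=
  let (x, xi) := p in
  (forall t, bd (xi t) = gcomm x t) /\
  (forall a, xi (bd a) = gmul (act x a) (ginv a)) /\
  (forall s t, xi (gmul s t) = gmul (xi s) (act s (xi t))).

Definition zmul (p q : Z0T) : Z0T :=
  let (x, xi) := p in let (y, eta) := q in
  (gmul x y, fun t => gmul (act x (eta t)) (xi t)).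

Definition zinv (p : Z0T) : Z0T :=
  let (x, xi) := p in (ginv x, fun t => act (ginv x) (ginv (xi t))).

Definition zone : Z0T := (gone, fun _ => gone).

Definition zdelta (c : G1) : Z0T := (bd c, fun t => gmul c (ginv (act t c))).

Definition zbr (p q : Z0T) : G1 := (snd p) (fst q).

Definition zact (p : Z0T) (a : G1) : G1 := act (fst p) a.

End Centre.
Arguments zdelta {G1 G0}.

(* Main.v *)
Require Import Defs.
From Stdlib Require Import FunctionalExtensionality.

Section GroupLemmas.
Variable G : group.
Implicit Types a b c : G.
Lemma gA a b c : gmul (gmul a b) c = gmul a (gmul b c).
Proof. symmetry; apply gmulA. Qed.
Lemma gKl a b : gmul (ginv a) (gmul a b) = b.
Proof. rewrite gmulA, gmulVg, gmul1g; reflexivity. Qed.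
Lemma gKr a b : gmul a (gmul (ginv a) b) = b.
Proof. rewrite gmulA, gmulgV, gmul1g; reflexivity. Qed.
Lemma gcancel a b c : gmul a b = gmul a c -> b = c.
Proof. intro H. rewrite <- (gKl a b), H, gKl. reflexivity. Qed.
Lemma gcancelr a b c : gmul b a = gmul c a -> b = c.
Proof. intro H. rewrite <- (gmulg1 _ b), <- (gmulgV _ a), gmulA, H, <- gmulA, gmulgV, gmulg1. reflexivity. Qed.
Lemma ginvM a b : ginv (gmul a b) = gmul (ginv b) (ginv a).
Proof. apply (gcancel (gmul a b)). rewrite gmulgV, gA, gKr, gmulgV. reflexivity. Qed.
Lemma ginvK a : ginv (ginv a) = a.
Proof. apply (gcancel (ginv a)). rewrite gmulgV, gmulVg. reflexivity. Qed.
Lemma ginv1 : ginv (@gone G) = gone.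
Proof. rewrite <- (gmul1g _ (ginv gone)), gmulgV. reflexivity. Qed.
Lemma gidem a : gmul a a = a -> a = gone.
Proof. intro H. apply (gcancel a). rewrite H, gmulg1. reflexivity. Qed.
End GroupLemmas.

Hint Rewrite gA gKl gKr gmulVg gmulgV gmul1g gmulg1 ginvM ginvK ginv1 : gs.
Section XM.
Variables (G1 G0 : group) (bd : G1 -> G0) (act : G0 -> G1 -> G1).
Hypothesis bdM : forall a b, bd (gmul a b) = gmul (bd a) (bd b).
Hypothesis act1 : forall a, act gone a = a.
Hypothesis actMx : forall x y a, act (gmul x y) a = act x (act y a).
Hypothesis actM : forall x a b, act x (gmul a b) = gmul (act x a) (act x b).
Hypothesis bdact : forall x a, bd (act x a) = gmul (gmul x (bd a)) (ginv x).
Hypothesis peif : forall a b, act (bd b) a = gmul (gmul b a) (ginv b).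

Lemma bd1 : bd gone = gone.
Proof. apply gidem. rewrite <- bdM, gmul1g. reflexivity. Qed.
Lemma bdV a : bd (ginv a) = ginv (bd a).
Proof. apply (gcancel _ (bd a)). rewrite <- bdM, !gmulgV, bd1. reflexivity. Qed.
Lemma actone x : act x gone = gone.
Proof. apply gidem. rewrite <- actM, gmul1g. reflexivity. Qed.
Lemma actV x a : act x (ginv a) = ginv (act x a).
Proof. apply (gcancel _ (act x a)). rewrite <- actM, !gmulgV, actone. reflexivity. Qed.
Lemma actact x y a : act x (act y a) = act (gmul x y) a.
Proof. rewrite actMx; reflexivity. Qed.
Lemma pswap b c r : gmul b (gmul c r) = gmul (act (bd b) c) (gmul b r).
Proof. rewrite peif. autorewrite with gs. reflexivity. Qed.

Lemma pswap0 b c : gmul b c = gmul (act (bd b) c) b.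
Proof. rewrite peif. autorewrite with gs. reflexivity. Qed.

Hint Rewrite bdM act1 actM bdact bd1 bdV actone actV actact : gs.
Ltac simp := autorewrite with gs.

Notation Z := (inZ0 bd act).
Lemma Z0_one : Z (zone G1 G0).
Proof. unfold inZ0, zone, gcomm; simpl. repeat split; intros; simp; reflexivity. Qed.

Lemma Z0_delta c : Z (zdelta bd act c).
Proof. unfold inZ0, zdelta, gcomm; simpl. repeat split; intros.
- simp. reflexivity.
- rewrite !peif. simp. reflexivity.
- simp. reflexivity.
Qed.

Lemma Z0_mul p q : Z p -> Z q -> Z (zmul act p q).
Proof. destruct p as [x xi], q as [y eta]. unfold inZ0, zmul, gcomm; simpl.
intros [A1 [A2 A3]] [B1 [B2 B3]]. repeat split; intros.
- simp. rewrite A1, B1. unfold gcomm. simp. reflexivity.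
- rewrite A2, B2. simp. reflexivity.
- rewrite A3, B3. simp. f_equal.
  rewrite (pswap (xi s)). rewrite A1. unfold gcomm. simp. reflexivity.
Qed.
Lemma Z0_inv p : Z p -> Z (zinv act p).
Proof. destruct p as [x xi]. unfold inZ0, zinv, gcomm; simpl.
intros [A1 [A2 A3]]. repeat split; intros.
- simp. rewrite A1. unfold gcomm. simp. reflexivity.
- rewrite A2. simp. reflexivity.
- rewrite A3. simp. rewrite (pswap0 (ginv (act (ginv x) (xi s)))). simp. rewrite A1. unfold gcomm. simp. reflexivity.
Qed.

Lemma zmulA p q r : zmul act p (zmul act q r) = zmul act (zmul act p q) r.
Proof. destruct p as [x xi], q as [y eta], r as [z zeta]. unfold zmul.
f_equal. - simp. reflexivity. - apply functional_extensionality; intro t. simp. reflexivity. Qed.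

Lemma zmul1 p : zmul act (zone G1 G0) p = p /\ zmul act p (zone G1 G0) = p.
Proof. destruct p as [x xi]. unfold zmul, zone. split; f_equal; try (simp; reflexivity);
 apply functional_extensionality; intro t; simp; reflexivity. Qed.

Lemma zmulV p : zmul act (zinv act p) p = zone G1 G0 /\ zmul act p (zinv act p) = zone G1 G0.
Proof. destruct p as [x xi]. unfold zmul, zinv, zone. split; f_equal; try (simp; reflexivity);
 apply functional_extensionality; intro t; simp; reflexivity. Qed.

Lemma zgroup : is_group_on Z (zmul act) (zinv act) (zone G1 G0).
Proof. refine (conj Z0_one (conj _ (conj _ (conj _ (conj _ _))))).
- intros; apply Z0_mul; assumption. - intros; apply Z0_inv; assumption.
- intros; apply zmulA. - intros; apply zmul1. - intros; apply zmulV. Qed.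

Lemma zdeltaM a b : zdelta bd act (gmul a b) = zmul act (zdelta bd act a) (zdelta bd act b).
Proof. unfold zmul, zdelta. f_equal. - simp; reflexivity.
- apply functional_extensionality; intro t. rewrite peif. simp. reflexivity. Qed.
Lemma zcomm p q : Z p -> Z q ->
  commT (zmul act) (zinv act) p q = zdelta bd act (zbr p q).
Proof. destruct p as [x xi], q as [y eta]. unfold inZ0, zmul, zinv, zdelta, zbr, commT; simpl.
intros [A1 [A2 A3]] [B1 [B2 B3]]. f_equal.
- rewrite A1. unfold gcomm. simp. reflexivity.
- apply functional_extensionality; intro t.
  assert (yt : gmul y t = gmul (bd (eta t)) (gmul t y)).
  { rewrite B1. unfold gcomm. simp. reflexivity. }
  assert (K : gmul (xi (gmul y t)) (eta t) = gmul (act x (eta t)) (gmul (xi t) (act t (xi y)))).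
  { rewrite yt, A3, A2, peif, A3. simp. reflexivity. }
  assert (K' : ginv (xi (gmul y t)) = gmul (eta t) (ginv (gmul (act x (eta t)) (gmul (xi t) (act t (xi y)))))).
  { rewrite <- K. simp. reflexivity. }
  assert (H : bd (xi y) = gmul x (gmul y (gmul (ginv x) (ginv y)))).
  { rewrite A1. unfold gcomm. simp. reflexivity. }
  assert (H2 : gmul x (gmul y (ginv x)) = gmul (bd (xi y)) y).
  { rewrite H. simp. reflexivity. }
  simp. rewrite <- H, H2, actMx, !peif. simp. f_equal.
  assert (E : forall R, gmul (ginv (act y (xi t))) (gmul (ginv (xi y)) R) = gmul (ginv (xi (gmul y t))) R).
  { intro R. rewrite A3. simp. reflexivity. }
  rewrite E, K'. simp. reflexivity.
Qed.
Lemma cent k b : bd k = gone -> gmul k b = gmul b k.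
Proof. intro H. rewrite pswap0, H, act1. reflexivity. Qed.
Lemma cent3 k d : bd k = gone -> gmul d (gmul k (ginv d)) = k.
Proof. intro H. rewrite <- gA, <- (cent k d H). simp. reflexivity. Qed.

Lemma zinvar x xi z zeta : Z (x, xi) -> Z (z, zeta) -> forall t,
  act t (gmul (xi z) (zeta x)) = gmul (xi z) (zeta x).
Proof. unfold inZ0. intros [A1 [A2 A3]] [C1 [C2 C3]] t.
assert (E1 : gmul (xi z) (act z (xi t)) = gmul (act x (zeta t)) (gmul (xi t) (gmul (act t (xi z)) (ginv (zeta t))))).
{ assert (zt : gmul z t = gmul (bd (zeta t)) (gmul t z)) by (rewrite C1; unfold gcomm; simp; reflexivity).
  rewrite <- A3, zt, A3, A2, peif, A3. simp. reflexivity. }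
assert (E2 : gmul (zeta x) (act x (zeta t)) = gmul (act z (xi t)) (gmul (zeta t) (gmul (act t (zeta x)) (ginv (xi t))))).
{ assert (xt : gmul x t = gmul (bd (xi t)) (gmul t x)) by (rewrite A1; unfold gcomm; simp; reflexivity).
  rewrite <- C3, xt, C3, C2, peif, C3. simp. reflexivity. }
assert (E2' : act x (zeta t) = gmul (ginv (zeta x)) (gmul (act z (xi t)) (gmul (zeta t) (gmul (act t (zeta x)) (ginv (xi t)))))).
{ rewrite <- E2. simp. reflexivity. }
rewrite E2' in E1. autorewrite with gs in E1.
assert (Kab : bd (gmul (zeta x) (xi z)) = gone).
{ rewrite bdM, A1, C1. unfold gcomm. simp. reflexivity. }
assert (Kef : bd (gmul (act t (zeta x)) (act t (xi z))) = gone).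
{ rewrite <- actM, bdact, Kab. simp. reflexivity. }
rewrite <- (gA _ (act t (zeta x)) (act t (xi z))), cent3 in E1 by exact Kef.
assert (E3 : gmul (act z (xi t)) (gmul (zeta x) (xi z)) = gmul (act z (xi t)) (gmul (act t (zeta x)) (act t (xi z)))).
{ rewrite <- cent by exact Kab. simp. rewrite E1. simp. reflexivity. }
apply gcancel in E3.
assert (ba : gmul (xi z) (zeta x) = gmul (zeta x) (xi z)).
{ apply (gcancel _ (zeta x)). rewrite <- gA, cent by exact Kab. reflexivity. }
rewrite ba, actM, <- E3. reflexivity.
Qed.
Lemma zmain :
  is_braided_xmod_on G1 Z (zmul act) (zinv act) (zone G1 G0)
    (zdelta bd act) (@zbr G1 G0) /\
  (forall (z : Z0T G1 G0) (a : G1), Z z ->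
     gmul (zbr z (zdelta bd act a)) a = zact act z a) /\
  is_xmod_on G1 Z (zmul act) (zinv act) (zone G1 G0)
    (zdelta bd act) (zact act).
Proof.
split; [|split].
- refine (conj zgroup (conj Z0_delta (conj zdeltaM (conj _ (conj _ (conj _ (conj _ _))))))).
  + intros p q Hp Hq. rewrite zcomm by assumption. reflexivity.
  + intros a b. unfold zbr, zdelta, gcomm; simpl. rewrite peif. simp. reflexivity.
  + intros [x xi] a Hx. destruct Hx as [A1 [A2 A3]]. unfold zbr, zdelta; simpl.
    rewrite A2. simp. reflexivity.
  + intros [x xi] [y eta] [z zeta] Hx Hy Hz. rewrite zcomm by assumption.
    pose proof (zinvar _ _ _ _ Hx Hz y) as W.
    destruct Hx as [A1 [A2 A3]]. unfold zbr, zdelta, zmul; simpl.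
    rewrite A3. simp. f_equal.
    transitivity (gmul (gmul (act y (xi z)) (act y (zeta x))) (ginv (act y (zeta x)))).
    { simp. reflexivity. }
    rewrite <- actM, W. simp. reflexivity.
  + intros [x xi] [y eta] [z zeta] Hx Hy Hz.
    destruct Hy as [B1 [B2 B3]]. unfold zbr, zmul, zinv; simpl.
    assert (yz : gmul y (gmul z (ginv y)) = gmul (bd (eta z)) z).
    { rewrite B1. unfold gcomm. simp. reflexivity. }
    simp. rewrite yz. destruct Hx as [A1 [A2 A3]]. rewrite A3, A2, peif. simp. reflexivity.
- intros [x xi] a [A1 [A2 A3]]. unfold zbr, zdelta, zact; simpl. rewrite A2. simp. reflexivity.
- refine (conj zgroup (conj Z0_delta (conj zdeltaM (conj _ (conj _ (conj _ (conj _ _))))))).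
  + intros a. unfold zact, zone; simpl. apply act1.
  + intros [x xi] [y eta] a _ _. unfold zact, zmul; simpl. apply actMx.
  + intros [x xi] a b _. unfold zact; simpl. apply actM.
  + intros [x xi] a Hx. destruct Hx as [A1 [A2 A3]]. unfold zact, zdelta, zmul, zinv; simpl.
    f_equal.
    * simp. reflexivity.
    * apply functional_extensionality; intro t. simp.
      assert (Q : gmul x (gmul (bd a) (ginv x)) = bd (act x a)) by (rewrite bdact; simp; reflexivity).
      rewrite Q, peif. simp. f_equal.
      rewrite (pswap (ginv (xi t))). simp. rewrite A1. unfold gcomm. simp. reflexivity.
  + intros a b. unfold zact, zdelta; simpl. apply peif.
Qed.
End XM.

Theorem corollary3p8 (G1 G0 : group) (bd : G1 -> G0) (act : G0 -> G1 -> G1)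
  (HG : is_xmod G1 G0 bd act) :
  is_braided_xmod_on G1 (inZ0 bd act) (zmul act) (zinv act) (zone G1 G0)
    (zdelta bd act) (@zbr G1 G0) /\
  (forall (z : Z0T G1 G0) (a : G1), inZ0 bd act z ->
     gmul (zbr z (zdelta bd act a)) a = zact act z a) /\
  is_xmod_on G1 (inZ0 bd act) (zmul act) (zinv act) (zone G1 G0)
    (zdelta bd act) (zact act).
Proof.
  destruct HG as [_ [_ [H1 [H2 [H3 [H4 [H5 H6]]]]]]].
  apply zmain.
  - exact H1.
  - exact H2.
  - intros; apply H3; exact I.
  - intros; apply H4; exact I.
  - intros; apply H5; exact I.
  - exact H6.
Qed.
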